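(* For all $n,k\ge0$, $$[x^ny^k]\,\frac{1}{x}\,\mathrm{Rev}\left(\frac{x(1-yx)}{1+rx+sx^2}\right)=\sum_{j=k}^n\binom{j}{k}\binom{n+k}{2j}s^{\,j-k}r^{\,n+k-2j}C_j,$$ where $C_j=\frac{1}{j+1}\binom{2j}{j}$ (only terms with $2j\le n+k$ contribute).
   Context: $\mathrm{Rev}$ denotes compositional inverse with respect to $x$. *)

(* Defs.v *)
From HB Require Import structures.
From mathcomp Require Import all_boot all_order all_algebra.
Set Implicit Arguments. Unset Strict Implicit. Unset Printing Implicit Defensive.
Import Order.TTheory GRing.Theory Num.Theory.
Local Open Scope ring_scope.

(* Formal power series in x with coefficients in a commutative ring A,
   represented by their coefficient sequence: a n = [x^n] a. *)
Definition fps (A : Type) := nat -> A.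

Section FPS.
Variable A : comNzRingType.

Definition fps_mul (a b : fps A) : fps A :=
  fun n => \sum_(i < n.+1) a i * b (n - i)%N.

Definition fps_one : fps A := fun n => if n == 0%N then 1 else 0.

Definition fps_X : fps A := fun n => if n == 1%N then 1 else 0.

Fixpoint fps_exp (a : fps A) (m : nat) : fps A :=
  if m is m'.+1 then fps_mul a (fps_exp a m') else fps_one.

(* composition f(g(x)), meaningful when g 0 = 0:
   [x^n] f(g) = sum_{m <= n} f_m [x^n] g^m *)
Definition fps_comp (f g : fps A) : fps A :=
  fun n => \sum_(m < n.+1) f m * fps_exp g m n.

Definition is_rev (f g : fps A) : Prop :=
  g 0%N = 0 /\ fps_comp f g = fps_X.

End FPS.

(* Catalan numbers C_j = binom(2j, j)/(j+1) (exact division) *)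
Definition catalan (j : nat) : nat := 'C(j.*2, j) %/ j.+1.

(* Main.v *)
Require Import Defs.
From HB Require Import structures.
From mathcomp Require Import all_boot all_order all_algebra.
From mathcomp Require Import zify ring.
From Stdlib Require Import FunctionalExtensionality.
Import Order.TTheory GRing.Theory Num.Theory.


Fixpoint TT (n : nat) : nat -> nat :=
  match n with
  | 0 => fun _ => 1
  | n'.+1 => fix Tm (m : nat) : nat :=
      match m with 0 => 0 | m'.+1 => Tm m' + TT n' m'.+2 end
  end.

Lemma TT0 m : TT 0 m = 1. Proof. by []. Qed.
Lemma TTS0 n : TT n.+1 0 = 0. Proof. by []. Qed.
Lemma TTSS n m : TT n.+1 m.+1 = TT n.+1 m + TT n m.+2. Proof. by []. Qed.
Arguments TT : simpl never.

Lemma TT_closed n m : TT n m * (n.*2 + m) = m * 'C(n.*2 + m, n).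
Proof.
elim: n m => [|n IHn] m; first by rewrite TT0 bin0 mul1n muln1.
elim: m => [|m IHm]; first by rewrite TTS0.
rewrite TTSS.
have H1 := IHm. have H2 := IHn m.+2.
have E1 : (n.+1).*2 + m = (n.*2 + m.+2)%N by rewrite doubleS; lia.
rewrite E1 in H1.
have E2 : (n.+1).*2 + m.+1 = (n.*2 + m.+2).+1 by rewrite doubleS; lia.
rewrite E2 binS.
set K := (n.*2 + m.+2)%N in H1 H2 *.
have H3 := mul_bin_left K n.
have EK : K - n = (n + m + 2)%N by rewrite /K -addnn; lia.
rewrite EK in H3.
set a := 'C(K, n) in H2 H3 *. set b := 'C(K, n.+1) in H1 H3 *.
set t1 := TT n.+1 m in H1 *. set t2 := TT n m.+2 in H2 *.
have Kpos : (0 < K * n.+1)%N by rewrite /K; nia.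
apply/eqP; rewrite -(eqn_pmul2l Kpos); apply/eqP.
have EKd : K = (n.*2 + m.+2)%N by [].
rewrite -addnn in EKd.
nia.
Qed.

Lemma TTn0 n : TT n 0 = (n == 0). Proof. by case: n. Qed.

Lemma TT_conv n a b :
  \sum_(i < n.+1) TT i a * TT (n - i) b = TT n (a + b).
Proof.
elim: n a b => [|n IHn] a b.
  by rewrite big_ord_recl big_ord0 !TT0.
elim: a => [|a IHa].
  rewrite big_ord_recl TTn0 mul1n subn0 big1 ?addn0 //.
rewrite big_ord_recl TT0 subn0.
have E : forall i : 'I_n.+1, TT (bump 0 i) a.+1 * TT (n.+1 - bump 0 i) b
   = TT (bump 0 i) a * TT (n.+1 - bump 0 i) b + TT i a.+2 * TT (n - i) b.
  by move=> i; rewrite /bump add1n TTSS mulnDl subSS.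
rewrite (eq_bigr _ (fun i _ => E i)) big_split IHn.
rewrite addSn TTSS -IHa big_ord_recl TT0 subn0 -addnA.
by rewrite !addSn.
Qed.

Lemma catalan_TT n : catalan n = TT n 1.
Proof.
have H := TT_closed n 1. rewrite mul1n addn1 in H.
have H2 := mul_bin_diag (n.*2.+1) n. rewrite /= in H2.
have H3 : 'C(n.*2.+1, n.+1) = 'C(n.*2.+1, n).
  rewrite -(bin_sub (_ : n <= n.*2.+1)%N); last by rewrite -addnn; lia.
  by congr 'C(_,_); rewrite -addnn; lia.
rewrite H3 -H in H2.
have E : 'C(n.*2, n) = TT n 1 * n.+1.
  apply/eqP; rewrite -(eqn_pmul2l (ltn0Sn n.*2)) H2. apply/eqP. lia.
by rewrite /catalan E mulnK.
Qed.

Lemma catalan_conv n :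
  catalan n.+1 = \sum_(i < n.+1) catalan i * catalan (n - i).
Proof.
rewrite catalan_TT TTSS TTS0 add0n -[2]/(1+1)%N -TT_conv.
by apply: eq_bigr => i _; rewrite !catalan_TT.
Qed.

Lemma catalan0 : catalan 0 = 1%N. Proof. by []. Qed.

Set Implicit Arguments. Unset Strict Implicit.
Local Open Scope ring_scope.

Section EQM.
Variable S : comNzRingType.
Implicit Types a b c d g p q u : {poly S}.

Definition eqm N a b := forall i, (i < N)%N -> a`_i = b`_i.

Lemma eqm_refl N a : eqm N a a. Proof. by []. Qed.
Lemma eqm_sym N a b : eqm N a b -> eqm N b a. Proof. by move=> H i Hi; rewrite H. Qed.
Lemma eqm_trans N a b c : eqm N a b -> eqm N b c -> eqm N a c.
Proof. by move=> H1 H2 i Hi; rewrite H1 ?H2. Qed.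
Lemma eqmD N a b c d : eqm N a b -> eqm N c d -> eqm N (a + c) (b + d).
Proof. by move=> H1 H2 i Hi; rewrite !coefD H1 ?H2. Qed.
Lemma eqmN N a b : eqm N a b -> eqm N (- a) (- b).
Proof. by move=> H1 i Hi; rewrite !coefN H1. Qed.
Lemma eqmB N a b c d : eqm N a b -> eqm N c d -> eqm N (a - c) (b - d).
Proof. by move=> H1 H2; apply: eqmD => //; apply: eqmN. Qed.
Lemma eqmM N a b c d : eqm N a b -> eqm N c d -> eqm N (a * c) (b * d).
Proof.
move=> H1 H2 i Hi; rewrite !coefM; apply: eq_bigr => j _.
rewrite H1 ?H2 //; first by apply: leq_ltn_trans Hi; apply: leq_subr.
by apply: leq_ltn_trans Hi; rewrite -ltnS.
Qed.
Lemma eqmX N a b m : eqm N a b -> eqm N (a ^+ m) (b ^+ m).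
Proof. by move=> H; elim: m => [|m IH]; rewrite ?expr0 // !exprS; apply: eqmM. Qed.
Lemma eqm_le N M a b : (M <= N)%N -> eqm N a b -> eqm M a b.
Proof. by move=> HM H i Hi; apply: H; apply: leq_trans HM. Qed.

Lemma coef_exp0 p m i : p`_0 = 0 -> (i < m)%N -> (p ^+ m)`_i = 0.
Proof.
move=> p0; elim: m i => [|m IH] i //= Hi.
rewrite exprS coefM big1 // => j _.
case: (nat_of_ord j) (ltn_ord j) => [|j'] Hj; first by rewrite p0 mul0r.
by rewrite IH ?mulr0 //; lia.
Qed.

Lemma eqm_Xn N e g : g`_0 = 0 -> eqm N ((g ^+ N) * e) 0.
Proof.
move=> g0 i Hi; rewrite coef0 coefM big1 // => j _.
by rewrite coef_exp0 ?mul0r //; apply: leq_ltn_trans Hi; rewrite -ltnS.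
Qed.

Lemma eqm_comp N a b g : g`_0 = 0 -> eqm N a b -> eqm N (a \Po g) (b \Po g).
Proof.
move=> g0 H i Hi; apply/eqP; rewrite -subr_eq0 -coefB -linearB /=.
rewrite comp_polyE coef_sum; apply/eqP; apply: big1 => j _.
rewrite coefZ coefB.
case: (ltnP j N) => Hj; first by rewrite H // subrr mul0r.
by rewrite coef_exp0 ?mulr0 //; apply: leq_trans Hj.
Qed.

Lemma eqm_X N a b : eqm N a b -> eqm N.+1 ('X * a) ('X * b).
Proof. by move=> H [|i] Hi; rewrite !coefXM //= H. Qed.

Lemma eqm_cancel N a b u : u`_0 = 1 -> eqm N (a * u) (b * u) -> eqm N a b.
Proof.
move=> u0 H.
suff: forall i, (i < N)%N -> (a - b)`_i = 0.
  by move=> H' i Hi; apply/eqP; rewrite -subr_eq0 -coefB H'.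
have Hd : eqm N ((a - b) * u) 0.
  by move=> i Hi; rewrite coef0 mulrBl coefB H // subrr.
elim/ltn_ind => i IH Hi.
have := Hd i Hi; rewrite coef0 coefM big_ord_recr /= subnn u0 mulr1 big1 ?add0r //.
move=> j _; rewrite IH ?mul0r //; last by apply: ltn_trans Hi.
Qed.

End EQM.


Section TR.
Variable A : comNzRingType.
Definition tr N (a : fps A) : {poly A} := \poly_(i < N) a i.

Lemma coef_tr N a i : (tr N a)`_i = if (i < N)%N then a i else 0.
Proof. by rewrite /tr coef_poly. Qed.

Implicit Types a b f g : fps A.
Lemma fps_mul_tr N a b i : (i < N)%N -> fps_mul a b i = (tr N a * tr N b)`_i.
Proof.
move=> Hi; rewrite coefM /fps_mul; apply: eq_bigr => j _.
rewrite !coef_tr ifT; last by apply: leq_ltn_trans Hi; rewrite -ltnS.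
by rewrite ifT //; apply: leq_ltn_trans Hi; apply: leq_subr.
Qed.

Lemma eqm_tr N a b : (forall i, (i < N)%N -> a i = b i) -> eqm N (tr N a) (tr N b).
Proof. by move=> H i Hi; rewrite !coef_tr Hi H. Qed.

Lemma fps_exp_tr N a m i : (i < N)%N -> fps_exp a m i = ((tr N a) ^+ m)`_i.
Proof.
elim: m i => [|m IH] i Hi.
  by rewrite expr0 coef1 /= /fps_one; case: (i == 0%N).
rewrite /= (fps_mul_tr _ _ Hi) exprS.
have H : eqm N (tr N a * tr N (fps_exp a m)) (tr N a * tr N a ^+ m).
  by apply: eqmM => // j Hj; rewrite coef_tr Hj IH.
exact: H.
Qed.

Lemma fps_comp_tr N f g i : g 0%N = 0 -> (i < N)%N ->
  fps_comp f g i = ((tr N f) \Po (tr N g))`_i.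
Proof.
move=> g0 Hi.
have E : tr N f = \sum_(j < N) f j *: 'X^j by rewrite /tr poly_def.
rewrite E linear_sum /= coef_sum.
under eq_bigr do rewrite linearZ /= comp_Xn_poly coefZ.
rewrite /fps_comp (big_ord_widen N (fun j => f j * fps_exp g j i)) //.
rewrite big_mkcond /=; apply: eq_bigr => j _.
case: ifP => Hj; first by rewrite (fps_exp_tr _ _ Hi).
rewrite coef_exp0 ?mulr0 //; last by rewrite ltnNge -ltnS Hj.
by rewrite coef_tr (leq_ltn_trans _ Hi).
Qed.
End TR.


Section ALG.
Variable S : comNzRingType.
Variables r s y : S.
Implicit Types a b d h f g p q u : {poly S}.

Definition Dp : {poly S} := 1 + r%:P * 'X + s%:P * 'X^2.
Definition Pp : {poly S} := 'X - y%:P * 'X^2.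
Definition Quad N g := eqm N (g - y%:P * g ^+ 2) ('X * (1 + r%:P * g + s%:P * g ^+ 2)).

Lemma eqm_eq N a b : a = b -> eqm N a b. Proof. by move=> ->. Qed.

Lemma Dp_comp g : Dp \Po g = 1 + r%:P * g + s%:P * g ^+ 2.
Proof.
rewrite /Dp !comp_polyD !comp_polyM comp_polyX !comp_polyC expr2.
by [].
Qed.

Lemma key N f g : g`_0 = 0 -> eqm N (f * Dp) Pp ->
  eqm N ((f \Po g) * (1 + r%:P * g + s%:P * g ^+ 2)) (g - y%:P * g ^+ 2).
Proof.
move=> g0 H; rewrite -Dp_comp -comp_polyM.
apply: eqm_trans (eqm_comp g0 H) _; apply: eqm_eq.
by rewrite /Pp comp_polyB comp_polyM comp_polyX comp_Xn_poly comp_polyC.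
Qed.

Lemma rev_quad N f g : g`_0 = 0 -> eqm N (f * Dp) Pp -> eqm N (f \Po g) 'X -> Quad N g.
Proof.
move=> g0 H HX; apply: eqm_sym; apply: eqm_trans _ (key g0 H).
by apply: eqmM; [apply: eqm_sym | apply: eqm_refl].
Qed.

Lemma Dg0 g : g`_0 = 0 -> (1 + r%:P * g + s%:P * g ^+ 2)`_0 = 1.
Proof.
by move=> g0; rewrite !coefD coef1 !coefCM g0 coef_exp0 // !mulr0 !addr0.
Qed.

Lemma quad_rev N f g : g`_0 = 0 -> eqm N (f * Dp) Pp -> Quad N g -> eqm N (f \Po g) 'X.
Proof.
move=> g0 H HQ; apply: (eqm_cancel (Dg0 g0)).
exact: eqm_trans (key g0 H) HQ.
Qed.

Lemma coef_mul_low n d h : (forall j, (j < n)%N -> d`_j = 0) -> h`_0 = 0 ->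
  forall i, (i <= n)%N -> (d * h)`_i = 0.
Proof.
move=> Hd h0 i Hi; rewrite coefM big1 // => j _.
have Hj : (j <= i)%N by rewrite -ltnS.
case: (ltnP j n) => Hjn; first by rewrite Hd ?mul0r.
have -> : (i - j = 0)%N by lia.
by rewrite h0 mulr0.
Qed.

Lemma quad_unique (G G' : fps S) : G 0%N = 0 -> G' 0%N = 0 ->
  (forall N, Quad N (tr N G)) -> (forall N, Quad N (tr N G')) -> forall n, G n = G' n.
Proof.
move=> G0 G0' HG HG'.
elim/ltn_ind => n IH.
case: n IH => [|m] IH; first by rewrite G0 G0'.
set N := m.+2.
have Hq := eqmB (HG N) (HG' N) (ltnSn m.+1).
set g := tr N G in Hq; set g' := tr N G' in Hq.
set d := g - g'; set h := g + g'.
have E1 : (g - y%:P * g^+2) - (g' - y%:P * g'^+2) = d - y%:P * (d * h)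
  by rewrite /d /h; ring.
have E2 : 'X * (1 + r%:P * g + s%:P * g ^+ 2) - 'X * (1 + r%:P * g' + s%:P * g' ^+ 2)
   = 'X * (r%:P * d + s%:P * (d * h)) by rewrite /d /h; ring.
rewrite E1 E2 in Hq.
have Hd : forall j, (j < m.+1)%N -> d`_j = 0.
  by move=> j Hj; rewrite /d coefB !coef_tr (ltn_trans Hj) // IH // subrr.
have h0 : h`_0 = 0 by rewrite /h coefD !coef_tr /= G0 G0' addr0.
move: Hq; rewrite coefB coefCM coefXM /= (coefD (r%:P * d)) !coefCM.
rewrite (coef_mul_low Hd h0) // (coef_mul_low Hd h0) // Hd // !mulr0 subr0 addr0.
by rewrite /d coefB !coef_tr ltnSn => /eqP; rewrite subr_eq0 => /eqP.
Qed.

End ALG.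


Section CAT.
Variable S : comNzRingType.
Variables r s y : S.
Variable N : nat.
Implicit Types a b d h f g p q u : {poly S}.

Definition cat : {poly S} := \poly_(j < N) (catalan j)%:R.

Lemma cat_eq : eqm N cat (1 + 'X * cat ^+ 2).
Proof.
move=> i Hi; rewrite coefD coef1 coefXM /cat coef_poly Hi.
case: i Hi => [|n] Hi /=; first by rewrite addr0.
rewrite add0r expr2 coefM catalan_conv natr_sum; apply: eq_bigr => j _.
have Hj := ltn_ord j.
by rewrite !coef_poly natrM !ifT //; lia.
Qed.

Definition gs : {poly S} := \poly_(i < N) r ^+ i.
Definition rho : {poly S} := 1 - r%:P * 'X.
Definition hp (p : nat) : {poly S} := \poly_(i < N) (('C(p + i, i))%:R * r ^+ i).

Lemma coef_rho a (i : nat) : (rho * a)`_i = a`_i - (if i is k.+1 then r * a`_k else 0).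
Proof.
rewrite /rho mulrBl mul1r coefB -mulrA coefCM coefXM.
by case: i => //=; rewrite mulr0.
Qed.

Lemma gs_inv : eqm N (rho * gs) 1.
Proof.
move=> i Hi; rewrite coef_rho coef1 /gs !coef_poly Hi.
case: i Hi => [|k] Hi /=; first by rewrite subr0.
by rewrite coef_poly ifT ?exprS ?subrr //; apply: ltn_trans Hi.
Qed.

Lemma hp_rec (p : nat) : eqm N (rho * hp p.+1) (hp p).
Proof.
move=> i Hi; rewrite coef_rho /hp !coef_poly Hi.
case: i Hi => [|k] Hi; first by rewrite !addn0 !bin0 subr0.
rewrite coef_poly ifT; last by apply: ltn_trans Hi.
have -> : (p.+1 + k.+1 = (p + k.+1).+1)%N by lia.
have -> : (p.+1 + k = p + k.+1)%N by lia.
rewrite binS natrD exprS; ring.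
Qed.

Lemma gs_pow (p : nat) : eqm N (gs ^+ p.+1) (hp p).
Proof.
elim: p => [|p IH].
  by move=> i Hi; rewrite expr1 /gs /hp !coef_poly Hi add0n binn mul1r.
rewrite exprS.
apply: eqm_trans (_ : eqm N (gs * hp p) _); first by apply: eqmM.
apply: eqm_trans (_ : eqm N (gs * (rho * hp p.+1)) _).
  by apply: eqmM => //; apply: eqm_sym; apply: hp_rec.
rewrite mulrA [gs * rho]mulrC.
apply: eqm_trans (_ : eqm N (1 * hp p.+1) _); last by rewrite mul1r.
by apply: eqmM => //; apply: gs_inv.
Qed.

Definition uu : {poly S} := 'X * (s%:P * 'X + y%:P) * gs ^+ 2.
Definition AA : {poly S} := gs * (cat \Po uu).

Lemma uu0 : uu`_0 = 0. Proof. by rewrite /uu -!mulrA coefXM. Qed.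

Lemma AA_quad : eqm N AA (1 + r%:P * 'X * AA + (s%:P * 'X ^+ 2 + y%:P * 'X) * AA ^+ 2).
Proof.
have H1 : eqm N (cat \Po uu) (1 + uu * (cat \Po uu) ^+ 2).
  apply: eqm_trans (eqm_comp uu0 cat_eq) _; apply: eqm_eq.
  by rewrite comp_polyD comp_polyM comp_polyX !expr2 comp_polyM -polyC1 comp_polyC.
have H2 : eqm N (rho * AA) (cat \Po uu).
  rewrite /AA mulrA.
  apply: eqm_trans (_ : eqm N (1 * (cat \Po uu)) _); last by rewrite mul1r.
  by apply: eqmM => //; apply: gs_inv.
have E3 : uu * (cat \Po uu) ^+ 2 = (s%:P * 'X ^+ 2 + y%:P * 'X) * AA ^+ 2.
  by rewrite /uu /AA; ring.
have E4 : AA = rho * AA + r%:P * 'X * AA by rewrite /rho; ring.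
rewrite {1}E4 -E3 addrAC; apply: eqmD => //.
by apply: eqm_trans H2 H1.
Qed.

End CAT.

Section EXTRACT.
Variable S : comNzRingType.
Variables r s y : S.
Variable N : nat.

Lemma term_eq (j l : nat) (h : {poly S}) :
  'X^j * ((s%:P * 'X) ^+ (j - l) * y%:P ^+ l *+ 'C(j, l)) * h =
  ('C(j,l)%:R * s^+(j-l) * y^+l)%:P * ('X^(j + (j-l)) * h).
Proof.
rewrite exprMn exprD !rmorphM !rmorphXn rmorph_nat -mulr_natr; ring.
Qed.

Lemma AA_coef n : (n < N)%N ->
  (AA r s y N)`_n = \sum_(j < N) \sum_(l < j.+1)
     ('C(j,l) * 'C(n + l, j.*2) * catalan j)%:R * s ^+ (j - l) * r ^+ (n + l - j.*2) * y ^+ l.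
Proof.
move=> Hn.
rewrite /AA /cat poly_def linear_sum /= mulr_sumr coef_sum; apply: eq_bigr => j _.
rewrite linearZ /= comp_Xn_poly -scalerAr coefZ.
have E : gs r N * uu r s y N ^+ j = 'X^j * (s%:P * 'X + y%:P) ^+ j * gs r N ^+ (j.*2).+1.
  by rewrite /uu !exprMn exprS -addnn exprD; ring.
rewrite E.
rewrite (_ : ('X^j * (s%:P * 'X + y%:P) ^+ j * gs r N ^+ (j.*2).+1)`_n =
             ('X^j * (s%:P * 'X + y%:P) ^+ j * hp r N (j.*2))`_n); last first.
  have H := eqmM (eqm_refl (N:=N) ('X^j * (s%:P * 'X + y%:P) ^+ j)) (gs_pow (N:=N) r (j.*2)).
  exact: H.
rewrite exprDn mulr_sumr mulr_suml coef_sum mulr_sumr; apply: eq_bigr => l _.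
have Hl := ltn_ord l.
rewrite term_eq coefCM coefXnM /hp coef_poly -!addnn.
case: ltnP => H.
  rewrite (bin_small (_ : n + l < j + j)%N); last by lia.
  by rewrite muln0 mul0n !mulr0 !mul0r.
rewrite ifT; last by lia.
have -> : (j + j + (n - (j + (j - l))) = n + l)%N by lia.
have -> : (n - (j + (j - l)) = n + l - (j + j))%N by lia.
rewrite bin_sub; last by lia.
rewrite !natrM; ring.
Qed.
End EXTRACT.


Section FINAL.
Variable R : comNzRingType.
Variables r s : R.

Definition formula (n k : nat) : R :=
  \sum_(k <= j < n.+1)
      ('C(j, k) * 'C(n + k, j.*2) * catalan j)%:R
        * s ^+ (j - k) * r ^+ (n + k - j.*2).

Lemma constP (c e1 e2 l : nat) (a b : R) :
  c%:R * a%:P ^+ e1 * b%:P ^+ e2 * 'X ^+ l = (c%:R * a ^+ e1 * b ^+ e2)%:P * 'X ^+ l.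
Proof. by rewrite !rmorphM !rmorphXn rmorph_nat. Qed.

Lemma AA_coef_k N n k : (n < N)%N ->
  (AA r%:P s%:P 'X N)`_n`_k = formula n k.
Proof.
move=> Hn; rewrite (AA_coef _ _ _ Hn) coef_sum.
pose W j := ('C(j, k) * 'C(n + k, j.*2) * catalan j)%:R * s ^+ (j - k) * r ^+ (n + k - j.*2).
have E1 : forall j : 'I_N, (\sum_(l < j.+1)
     ('C(j,l) * 'C(n + l, j.*2) * catalan j)%:R * s%:P ^+ (j - l) * r%:P ^+ (n + l - j.*2)
     * 'X ^+ l)`_k = if (k < j.+1)%N then W j else 0.
  move=> j; rewrite coef_sum.
  under eq_bigr => l _ do rewrite constP coefCM coefXn mulr_natr mulrb.
  rewrite -big_mkcond /=.
  under eq_bigl => l do rewrite eq_sym.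
  by rewrite (big_ord1_eq _ (fun l : nat => ('C(j,l) * 'C(n + l, j.*2) * catalan j)%:R * s ^+ (j - l) * r ^+ (n + l - j.*2))).
rewrite (eq_bigr _ (fun j _ => E1 j)) /formula.
rewrite big_geq_mkord (big_ord_widen_cond N (fun i : nat => true && (k <= i)%N) W) //.
rewrite [RHS]big_mkcond; apply: eq_bigr => j _.
have Hj := ltn_ord j.
case: (ltnP k j.+1) => Hk /=.
  rewrite (_ : (k <= j)%N) //=.
  case: (ltnP j n.+1) => Hjn //.
  rewrite /W (bin_small (_ : n + k < j.*2)%N); last by rewrite -addnn; lia.
  by rewrite muln0 mul0n !mul0r.
by rewrite (_ : (k <= j)%N = false) //; apply/negbTE; rewrite -ltnNge.
Qed.

Definition Gstar : fps {poly R} :=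
  fun n => if n is m.+1 then \poly_(k < m.+1) formula m k else 0.

Lemma Gstar_coef m k : (Gstar m.+1)`_k = formula m k.
Proof.
rewrite /= coef_poly; case: ltnP => // Hk.
by rewrite /formula big_geq.
Qed.

Lemma Gstar_tr N : eqm N.+1 (tr N.+1 Gstar) ('X * AA r%:P s%:P 'X N).
Proof.
move=> i Hi; rewrite coef_tr Hi coefXM.
case: i Hi => [|m] Hi //=.
by apply/polyP => k; rewrite Gstar_coef AA_coef_k.
Qed.

Lemma Quad_congr (S : comNzRingType) (a b c : S) N g g' :
  eqm N g g' -> Quad a b c N g' -> Quad a b c N g.
Proof.
move=> H HQ.
have H2 : eqm N (g ^+ 2) (g' ^+ 2) by apply: eqmX.
apply: eqm_trans (_ : eqm N (g' - c%:P * g' ^+ 2) _).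
  by apply: eqmB => //; apply: eqmM.
apply: eqm_trans HQ _.
apply: eqmM => //; apply: eqmD; first apply: eqmD => //.
- by apply: eqmM => //; apply: eqm_sym.
- by apply: eqmM => //; apply: eqm_sym.
Qed.

Lemma Gstar_quad N : Quad r%:P s%:P 'X N (tr N Gstar).
Proof.
case: N => [|M]; first by move=> i.
apply: Quad_congr (Gstar_tr (N:=M)) _.
have H := eqm_X (AA_quad r%:P s%:P 'X (N:=M)).
rewrite /Quad.
set A := AA r%:P s%:P 'X M in H *.
have E : 'X * (1 + r%:P%:P * 'X * A + (s%:P%:P * 'X ^+ 2 + ('X : {poly R})%:P * 'X) * A ^+ 2)
  = 'X * (1 + r%:P%:P * ('X * A) + s%:P%:P * ('X * A) ^+ 2) + ('X : {poly R})%:P * ('X * A) ^+ 2.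
  by ring.
rewrite E in H.
move=> i Hi; rewrite coefB H // coefD addrK //.
Qed.

End FINAL.

Unset Implicit Arguments. Set Strict Implicit.

Lemma coef_Dp (S : comNzRingType) (a b : S) (i : nat) :
  (Dp a b)`_i = if i == 0%N then 1 else if i == 1%N then a
                else if i == 2%N then b else 0.
Proof.
rewrite /Dp !coefD coef1 !coefCM coefX coefXn.
by case: i => [|[|[|i]]] /=; rewrite ?mulr0 ?mulr1 ?addr0 ?add0r.
Qed.

Lemma coef_Pp (S : comNzRingType) (c : S) (i : nat) :
  (Pp c)`_i = if i == 1%N then 1 else if i == 2%N then - c else 0.
Proof.
rewrite /Pp coefB coefCM coefX coefXn.
by case: i => [|[|[|i]]] /=; rewrite ?mulr0 ?mulr1 ?subr0 ?sub0r.
Qed.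

Theorem mainTheorem16 (R : comNzRingType) (r s : R) (F : fps {poly R}) :
  fps_mul F (fun m => if m == 0%N then 1 else if m == 1%N then r%:P
                      else if m == 2%N then s%:P else 0)
  = (fun m => if m == 1%N then 1 else if m == 2%N then - 'X else 0) ->
  (exists G : fps {poly R}, is_rev F G) /\
  forall G : fps {poly R}, is_rev F G ->
  forall n k : nat,
    (G n.+1)`_k =
    \sum_(k <= j < n.+1)
      ('C(j, k) * 'C(n + k, j.*2) * catalan j)%:R
        * s ^+ (j - k) * r ^+ (n + k - j.*2).
Proof.
move=> hF.
have HE : forall N, eqm N (tr N F * Dp r%:P s%:P) (Pp 'X).
  move=> N i Hi.
  have H1 : eqm N (tr N F * Dp r%:P s%:P) (tr N F * tr N (fun m => if m == 0%N then 1 else if m == 1%N then r%:P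
                      else if m == 2%N then s%:P else 0)).
    by apply: eqmM => // j Hj; rewrite coef_Dp coef_tr Hj.
  by rewrite H1 // -fps_mul_tr // hF coef_Pp.
have G0 : Gstar r s 0%N = 0 by [].
have Hrev : is_rev F (Gstar r s).
  split => //; apply: functional_extensionality => n.
  rewrite (fps_comp_tr (N:=n.+1)) //.
  have H := quad_rev (N:=n.+1) (g:=tr n.+1 (Gstar r s)) _ (HE n.+1) (Gstar_quad r s (N:=n.+1)).
  rewrite H ?coef_tr //= ?coefX //.
  by rewrite /fps_X; case: (n == 1%N).
split; first by exists (Gstar r s).
move=> G [HG0 HGc] n k.
have HQ : forall N, Quad r%:P s%:P 'X N (tr N G).
  move=> N; apply: (rev_quad (f:=tr N F)) => //; first by rewrite coef_tr; case: N.
  move=> i Hi; rewrite -fps_comp_tr // HGc coefX /fps_X.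
  by case: (i == 1%N).
have -> : G n.+1 = Gstar r s n.+1.
  by apply: (quad_unique HG0 G0 HQ) => N; exact: (Gstar_quad r s (N:=N)).
by rewrite Gstar_coef.
Qed.
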